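(* Let $G$ be a graph on $n\ge 2$ vertices and let $P_4(G)$ be the number of paths of length $4$ in $G$ (subgraphs isomorphic to the path with $4$ edges). For distinct vertices $u,v$ let $d(u,v)$ be the number of vertices adjacent to both $u$ and $v$. Then $$P_4(G)\le \frac12\sum_{u\in V(G)}\sum_{v\in V(G),\,v\ne u} d(u)\,d(v)\,d(u,v),$$ and consequently, if $x_1\ge x_2\ge\cdots\ge x_n$ is the degree sequence of $G$ in non-increasing order, $$P_4(G)\le \sum_{i=1}^{n-1}\sum_{j=i+1}^{n} x_i x_j^2 .$$
   Context: $d(u)$ denotes the degree of vertex $u$ in $G$. *)

(* Defs.v *)
(* A simple graph on a finite vertex type T is a
   symmetric irreflexive relation e : rel T. *)
From mathcomp Require Import all_boot all_order all_algebra.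
Set Implicit Arguments. Unset Strict Implicit. Unset Printing Implicit Defensive.

Definition deg (T : finType) (e : rel T) (u : T) : nat := #|[set v | e u v]|.

Definition codeg (T : finType) (e : rel T) (u v : T) : nat :=
  #|[set w | e u w && e v w]|.

(* the i-th edge {f i, f (i+1)} of a vertex labelling f of the path P_4
   (vertices 0..4, edges {i,i+1} for i < 4) *)
Definition p4edge (T : finType) (f : {ffun 'I_5 -> T}) (i : 'I_4) : {set T} :=
  [set f (widen_ord (leqnSn 4) i); f (lift ord0 i)].

Definition is_P4 (T : finType) (e : rel T) (S : {set {set T}}) : bool :=
  [exists f : {ffun 'I_5 -> T},
     [&& injectiveb f,
         [forall i : 'I_4, e (f (widen_ord (leqnSn 4) i)) (f (lift ord0 i))] &
         S == [set p4edge f i | i : 'I_4]]].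

Definition P4 (T : finType) (e : rel T) : nat := #|[set S | is_P4 e S]|.

Definition degseq (T : finType) (e : rel T) : seq nat :=
  sort geq [seq deg e v | v <- enum T].

(* Main.v *)
Require Import Defs.
From mathcomp Require Import all_boot all_order all_algebra zify.
Import Order.TTheory GRing.Theory Num.Theory.

Section S.
Variables (T : finType) (e : rel T).
Hypotheses (e_sym : symmetric e) (e_irr : irreflexive e).

Definition Good : {set {ffun 'I_5 -> T}} :=
  [set f : {ffun 'I_5 -> T} | injectiveb f &&
     [forall i : 'I_4, e (f (widen_ord (leqnSn 4) i)) (f (lift ord0 i))]].
Definition phi (f : {ffun 'I_5 -> T}) : {set {set T}} := [set p4edge f i | i : 'I_4].
Definition revf (f : {ffun 'I_5 -> T}) : {ffun 'I_5 -> T} := [ffun i => f (rev_ord i)].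

Lemma rw_ord (i : 'I_4) : rev_ord (widen_ord (leqnSn 4) i) = lift ord0 (rev_ord i).
Proof. apply: val_inj; rewrite /= /bump /=; have := ltn_ord i; lia. Qed.
Lemma rl_ord (i : 'I_4) : rev_ord (lift ord0 i) = widen_ord (leqnSn 4) (rev_ord i).
Proof. apply: val_inj; rewrite /= /bump /=; have := ltn_ord i; lia. Qed.

Lemma rev_good (f : {ffun 'I_5 -> T}) : f \in Good -> revf f \in Good.
Proof.
rewrite !inE => /andP[/injectiveP inj /forallP H]; apply/andP; split.
  apply/injectiveP => x y; rewrite !ffunE => /inj; exact: rev_ord_inj.
apply/forallP => i; rewrite !ffunE rw_ord rl_ord e_sym; exact: H.
Qed.

Lemma rev_phi (f : {ffun 'I_5 -> T}) : phi (revf f) = phi f.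
Proof.
have E i : p4edge (revf f) i = p4edge f (rev_ord i).
  by rewrite /p4edge !ffunE rw_ord rl_ord setUC.
apply/setP => X; apply/imsetP/imsetP => -[i _ ->].
  by exists (rev_ord i) => //; rewrite E.
by exists (rev_ord i) => //; rewrite E rev_ordK.
Qed.

Lemma rev_neq (f : {ffun 'I_5 -> T}) : injectiveb f -> revf f != f.
Proof.
move/injectiveP => inj; apply/negP => /eqP E.
have := congr1 (fun g : {ffun 'I_5 -> T} => g ord0) E.
rewrite /= ffunE => /inj /(congr1 val) /=; done.
Qed.

Lemma partA : 2 * P4 e <= #|Good|.
Proof.
rewrite -sum1_card (partition_big phi (fun S => is_P4 e S)).
  rewrite /P4 mulnC -sum_nat_const.
  have -> : \sum_(i in [set S | is_P4 e S]) 2 = \sum_(S | is_P4 e S) 2.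
    by apply: eq_bigl => S; rewrite inE.
  apply: leq_sum => S /existsP [f /and3P [inj ed /eqP ->]].
  have fG : f \in Good by rewrite inE inj.
  rewrite (bigD1 f) /=; last by rewrite fG eqxx.
  rewrite (bigD1 (revf f)) /=; last by rewrite rev_good // rev_phi eqxx rev_neq.
  by [].
move=> f; rewrite inE => /andP[inj ed]; apply/existsP; exists f.
by rewrite inj ed eqxx.
Qed.

Definition Big : {set (T*T)*((T*T)*T)} :=
  [set t | [&& t.1.1 != t.1.2, e t.1.1 t.2.1.1, e t.1.2 t.2.1.2, e t.1.1 t.2.2 & e t.1.2 t.2.2]].

Lemma cardBig : \sum_u \sum_(v | v != u) deg e u * deg e v * codeg e u v = #|Big|.
Proof.
transitivity (\sum_u \sum_v \sum_q (((u, v), q) \in Big : nat)).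
  apply: eq_bigr => u _; rewrite big_mkcond; apply: eq_bigr => v _.
  case: eqP => [->|ne] /=.
    by rewrite big1 // => q _; rewrite inE eqxx.
  rewrite /deg /codeg -!cardsX -sum1_card big_mkcond; apply: eq_bigr => -[[a x] c] _.
  rewrite !inE /=.
  have -> : (u != v) = true by apply/eqP => E; apply ne; rewrite E.
  by rewrite !andbA.
rewrite pair_bigA /= pair_bigA /= -sum1_card [RHS]big_mkcond /=.
by apply: eq_bigr => -[[u v] q] _ /=; case: (_ \in _).
Qed.

Definition psi (f : {ffun 'I_5 -> T}) : (T*T)*((T*T)*T) :=
  ((f (inord 1), f (inord 3)), ((f (inord 0), f (inord 4)), f (inord 2))).

Lemma edge_at (f : {ffun 'I_5 -> T}) k : f \in Good -> k < 4 -> e (f (inord k)) (f (inord k.+1)).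
Proof.
rewrite inE => /andP[_ /forallP H] hk.
have := H (Ordinal hk).
have -> : widen_ord (leqnSn 4) (Ordinal hk) = inord k by apply: val_inj; rewrite /= inordK //; lia.
have -> : lift ord0 (Ordinal hk) = inord k.+1 by apply: val_inj; rewrite /= inordK //; lia.
done.
Qed.

Lemma partB : #|Good| <= #|Big|.
Proof.
rewrite -(card_in_imset (f := psi)).
  apply: subset_leq_card; apply/subsetP => t /imsetP [f fG ->].
  have inj : injective f by move: fG; rewrite inE => /andP[/injectiveP].
  rewrite inE /=.
  have e0 := edge_at f 0 fG isT; have e1 := edge_at f 1 fG isT.
  have e2 := edge_at f 2 fG isT; have e3 := edge_at f 3 fG isT.
  rewrite e_sym e0 e3 e1 e_sym e2 /= andbT.
  apply/negP => /eqP /inj /(congr1 val); rewrite /= !inordK //.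
move=> f g _ _ [E1 E3 E0 E4 E2]; apply/ffunP => -[[|[|[|[|[|m]]]]] Hm] //.
- by have -> : Ordinal Hm = inord 0 by apply: val_inj; rewrite /= inordK.
- by have -> : Ordinal Hm = inord 1 by apply: val_inj; rewrite /= inordK.
- by have -> : Ordinal Hm = inord 2 by apply: val_inj; rewrite /= inordK.
- by have -> : Ordinal Hm = inord 3 by apply: val_inj; rewrite /= inordK.
- by have -> : Ordinal Hm = inord 4 by apply: val_inj; rewrite /= inordK.
Qed.

Lemma part1 : 2 * P4 e <= \sum_u \sum_(v | v != u) deg e u * deg e v * codeg e u v.
Proof. by rewrite cardBig; apply: leq_trans (partA) (partB). Qed.
End S.

Lemma split_sum n (F : 'I_n -> 'I_n -> nat) (Fs : forall i j, F i j = F j i) :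
  \sum_(i : 'I_n) \sum_(j : 'I_n) F i j = 2 * (\sum_(i : 'I_n) \sum_(j : 'I_n | i < j) F i j) + \sum_(i : 'I_n) F i i.
Proof.
have E i : \sum_(j : 'I_n) F i j = \sum_(j : 'I_n | i < j) F i j + \sum_(j : 'I_n | j < i) F i j + F i i.
  rewrite (bigD1 i) //= addnC; congr (_ + _).
  rewrite (bigID (fun j : 'I_n => i < j)) /=; congr (_ + _); apply: eq_bigl => j.
    by rewrite -val_eqE /=; case: ltngtP.
  by rewrite -val_eqE /=; case: ltngtP.
rewrite (eq_bigr _ (fun i _ => E i)) !big_split /=; congr (_ + _).
rewrite mul2n -addnn; congr (_ + _).
rewrite [LHS](eq_bigr (fun i : 'I_n => \sum_(j : 'I_n) if j < i then F i j else 0)); last first.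
  by move=> i _; rewrite big_mkcond.
rewrite [RHS](eq_bigr (fun i : 'I_n => \sum_(j : 'I_n) if i < j then F i j else 0)); last first.
  by move=> i _; rewrite big_mkcond.
rewrite [LHS]exchange_big; apply: eq_bigr => i _; apply: eq_bigr => j _.
by case: ifP; rewrite // Fs.
Qed.

Section S2.
Variables (T : finType) (e : rel T).

Definition hh (x y : nat) := x * y * minn x y.

Lemma sum_deg (F : nat -> nat) :
  \sum_u F (deg e u) = \sum_(i < #|T|) F (nth 0 (degseq e) i).
Proof.
have sz : size (degseq e) = #|T| by rewrite size_sort size_map -cardE.
transitivity (\sum_(x <- degseq e) F x); last by rewrite (big_nth 0) big_mkord sz.
rewrite /degseq (perm_big _ (permEl (perm_sort _ _))) big_map big_enum /=.
by apply: eq_bigl.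
Qed.

Lemma part2 :
  \sum_u \sum_(v | v != u) deg e u * deg e v * codeg e u v <=
  2 * \sum_(i < #|T|) \sum_(j < #|T| | (i < j)%N)
             (nth 0 (degseq e) i * (nth 0 (degseq e) j) ^ 2).
Proof.
set s := degseq e.
apply: (@leq_trans (\sum_u \sum_(v | v != u) hh (deg e u) (deg e v))).
  apply: leq_sum => u _; apply: leq_sum => v _; rewrite /hh leq_mul2l leq_min.
  apply/orP; right; apply/andP; split; apply: subset_leq_card; apply/subsetP => w;
    by rewrite !inE => /andP[].
have D : \sum_u \sum_v hh (deg e u) (deg e v) =
   \sum_u \sum_(v | v != u) hh (deg e u) (deg e v) + \sum_u hh (deg e u) (deg e u).
  by rewrite -big_split; apply: eq_bigr => u _; rewrite (bigD1 u) //= addnC.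
have S1 : \sum_u \sum_v hh (deg e u) (deg e v) = \sum_(i<#|T|) \sum_(j<#|T|) hh (nth 0 s i) (nth 0 s j).
  apply: eq_trans _ (sum_deg (fun x => \sum_(j<#|T|) hh x (nth 0 s j))).
  apply: eq_bigr => u _; exact: (sum_deg (fun y => hh (deg e u) y)).
have S2 : \sum_u hh (deg e u) (deg e u) = \sum_(i<#|T|) hh (nth 0 s i) (nth 0 s i).
  exact: (sum_deg (fun y => hh y y)).
rewrite S1 S2 in D.
rewrite split_sum in D; last by move=> i j; rewrite /hh minnC (mulnC (nth 0 s i)).
have -> : \sum_u \sum_(v | v != u) hh (deg e u) (deg e v) =
   2 * \sum_(i < #|T|) \sum_(j < #|T| | i < j) hh (nth 0 s i) (nth 0 s j).
  by apply/eqP; rewrite -(eqn_add2r (\sum_(i < #|T|) hh (nth 0 s i) (nth 0 s i))) -D.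
rewrite leq_eqVlt; apply/orP; left; apply/eqP; congr (2 * _).
apply: eq_bigr => i _; apply: eq_bigr => j ij.
have sz : size s = #|T| by rewrite size_sort size_map -cardE.
have srt : sorted geq s by apply: sort_sorted => x y; exact: leq_total.
have le : nth 0 s j <= nth 0 s i.
  apply: (sorted_leq_nth (leT := geq)) => //.
  - by move=> x y z /= ? ?; apply: leq_trans; eassumption.
  - by move=> x /=.
  - by rewrite inE sz.
  - by rewrite inE sz.
  - exact: ltnW.
by rewrite /hh (minn_idPr le) -mulnA.
Qed.
End S2.

Local Open Scope ring_scope.

Theorem mainTheorem2 (T : finType) (e : rel T)
  (e_sym : symmetric e) (e_irr : irreflexive e) (hn : (2 <= #|T|)%N) :
  ((P4 e)%:R <= (1 / 2 : rat) *
      (\sum_(u : T) \sum_(v : T | v != u)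
          (deg e u * deg e v * codeg e u v)%:R))
  /\
  (P4 e <= \sum_(i < #|T|) \sum_(j < #|T| | (i < j)%N)
             (nth 0 (degseq e) i * (nth 0 (degseq e) j) ^ 2))%N.
Proof.
have H1 := @part1 T e e_sym.
split.
  have -> : \sum_(u : T) \sum_(v : T | v != u) (deg e u * deg e v * codeg e u v)%:R
     = (\sum_(u : T) \sum_(v : T | v != u) (deg e u * deg e v * codeg e u v))%N%:R :> rat.
    by rewrite natr_sum; apply: eq_bigr => u _; rewrite natr_sum.
  have -> : (P4 e)%:R = (1 / 2 : rat) * (2 * P4 e)%N%:R.
    rewrite natrM mulrA mul1r mulVf // ?mul1r //. 
  by rewrite ler_pM2l // ler_nat.
have H2 := @part2 T e.
rewrite -(leq_pmul2l (isT : (0 < 2)%N)).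
exact: leq_trans H1 H2.
Qed.
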